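(* Let $(S(t),E(t),I(t),R(t))$ be a solution of the SEIR initial value problem described in the context. If $S(t)>0$ for $t>0$, then \[ R''(t)+(\gamma+\delta)R'(t)=\gamma\delta\Bigl(N-\tilde S e^{(\beta/\gamma)\tilde R}e^{-(\beta/\gamma)R(t)}-R(t)\Bigr)\qquad(t>0). \]
   Context: Let $\beta,\gamma,\delta>0$ be constants and $\tilde S,\tilde E,\tilde I,\tilde R$ real numbers with $N:=\tilde S+\tilde E+\tilde I+\tilde R>0$. The SEIR initial value problem is $S'(t)=-\beta S(t)I(t)$, $E'(t)=\beta S(t)I(t)-\delta E(t)$, $I'(t)=\delta E(t)-\gamma I(t)$, $R'(t)=\gamma I(t)$ for $t>0$, with $S(0)=\tilde S$, $E(0)=\tilde E$, $I(0)=\tilde I$, $R(0)=\tilde R$; a solution is a vector function $(S,E,I,R)$ of class $C^1(0,\infty)\cap C[0,\infty)$ satisfying these. Standing assumptions: (A1) $\tilde I>0$; (A2) $\tilde E>(\gamma/\delta)\tilde I$; (A3) $\tilde S>\delta\tilde E/(\beta\tilde I)$; (A4) $\tilde R\ge 0$ and $N>\tilde S e^{(\beta/\gamma)\tilde R}+\tilde R$. *)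

(* Defs.v *)
From Stdlib Require Import Reals.
From Coquelicot Require Import Coquelicot.
Open Scope R_scope.

(* f is of class C^1(0,oo) ∩ C[0,oo): differentiable with continuous
   derivative on (0,oo), and continuous on [0,oo) (right-continuous at 0,
   continuity on (0,oo) following from differentiability). *)
Definition C1_open_C0_closed (f : R -> R) : Prop :=
  (forall t, 0 < t -> ex_derive f t /\ continuous (Derive f) t) /\
  filterlim f (at_right 0) (locally (f 0)).

Definition SEIR_solution (beta gamma delta S0 E0 I0 R0 : R)
    (S E I Rf : R -> R) : Prop :=
  C1_open_C0_closed S /\ C1_open_C0_closed E /\
  C1_open_C0_closed I /\ C1_open_C0_closed Rf /\
  (forall t, 0 < t ->
     is_derive S t (- beta * S t * I t) /\
     is_derive E t (beta * S t * I t - delta * E t) /\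
     is_derive I t (delta * E t - gamma * I t) /\
     is_derive Rf t (gamma * I t)) /\
  S 0 = S0 /\ E 0 = E0 /\ I 0 = I0 /\ Rf 0 = R0.

(* Main.v *)
Require Import Defs.
From Stdlib Require Import Reals Lra.
From Coquelicot Require Import Coquelicot.
Open Scope R_scope.

Lemma const_pos (g : R -> R) (c : R) :
  (forall t, 0 < t -> is_derive g t 0) ->
  filterlim g (at_right 0) (locally c) -> forall t, 0 < t -> g t = c.
Proof.
  intros Hd Hl t Ht.
  assert (Hs : forall s, 0 < s <= t -> g s = g t).
  { intros s [Hs1 Hs2]. destruct (Req_dec s t) as [->|Hne]; [reflexivity|].
    apply eq_is_derive; [intros u Hu; apply Hd; lra | lra]. }
  destruct (Req_dec (g t) c) as [|Hne]; [assumption|exfalso].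
  assert (He : 0 < Rabs (g t - c) / 2).
  { assert (0 < Rabs (g t - c)) by (apply Rabs_pos_lt; lra). lra. }
  destruct (proj1 (filterlim_locally g c) Hl (mkposreal _ He)) as [del Hdel].
  set (y := Rmin (del/2) t).
  assert (Hy0 : 0 < y) by (unfold y; apply Rmin_pos; [destruct del; simpl; lra|lra]).
  assert (Hyt : y <= t) by apply Rmin_r.
  assert (Hyd : y <= del/2) by apply Rmin_l.
  assert (Hb : ball 0 del y).
  { unfold ball; simpl; unfold AbsRing_ball, abs, minus, plus, opp; simpl.
    rewrite Rabs_right; destruct del; simpl in *; lra. }
  specialize (Hdel y Hb Hy0).
  rewrite (Hs y (conj Hy0 Hyt)) in Hdel.
  unfold ball in Hdel; simpl in Hdel; unfold AbsRing_ball, abs, minus, plus, opp in Hdel; simpl in Hdel.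
  replace (g t + - c) with (g t - c) in Hdel by ring. lra.
Qed.

Lemma lim_plus (f g : R -> R) a b :
  filterlim f (at_right 0) (locally a) -> filterlim g (at_right 0) (locally b) ->
  filterlim (fun t => f t + g t) (at_right 0) (locally (a + b)).
Proof.
  intros Hf Hg. eapply filterlim_comp_2; [exact Hf|exact Hg|].
  apply (filterlim_plus a b).
Qed.

Lemma lim_mult (f g : R -> R) a b :
  filterlim f (at_right 0) (locally a) -> filterlim g (at_right 0) (locally b) ->
  filterlim (fun t => f t * g t) (at_right 0) (locally (a * b)).
Proof.
  intros Hf Hg. eapply filterlim_comp_2; [exact Hf|exact Hg|].
  apply (filterlim_mult a b).
Qed.

Lemma lim_exp (f : R -> R) a k :
  filterlim f (at_right 0) (locally a) ->
  filterlim (fun t => exp (k * f t)) (at_right 0) (locally (exp (k * a))).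
Proof.
  intros Hf. apply (filterlim_comp _ _ _ f (fun x => exp (k * x)) _ (locally a)); [exact Hf|].
  apply (continuous_comp (fun x => k * x) exp).
  - apply (ex_derive_continuous (fun x => k * x)). auto_derive; auto.
  - apply (ex_derive_continuous (V := R_NormedModule) exp). auto_derive; auto.
Qed.

Theorem lemma1 (beta gamma delta S0 E0 I0 R0 : R) (S E I Rf : R -> R) :
  0 < beta -> 0 < gamma -> 0 < delta ->
  0 < S0 + E0 + I0 + R0 ->
  (* (A1) *) 0 < I0 ->
  (* (A2) *) E0 > (gamma / delta) * I0 ->
  (* (A3) *) S0 > delta * E0 / (beta * I0) ->
  (* (A4) *) 0 <= R0 ->
  S0 + E0 + I0 + R0 > S0 * exp ((beta / gamma) * R0) + R0 ->
  SEIR_solution beta gamma delta S0 E0 I0 R0 S E I Rf ->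
  (forall t, 0 < t -> 0 < S t) ->
  forall t, 0 < t ->
    ex_derive (Derive Rf) t /\
    Derive_n Rf 2 t + (gamma + delta) * Derive Rf t =
      gamma * delta *
        ((S0 + E0 + I0 + R0)
         - S0 * exp ((beta / gamma) * R0) * exp (- (beta / gamma) * Rf t)
         - Rf t).
Proof.
  intros Hb Hg Hd _ _ _ _ _ _ Hsol _ t Ht.
  destruct Hsol as [[_ CS] [[_ CE] [[_ CI] [[_ CR] [Hder [HS0 [HE0 [HI0 HR0]]]]]]]].
  assert (Hloc : locally t (fun s => Derive Rf s = gamma * I s)).
  { exists (mkposreal _ Ht). intros s Hs.
    unfold ball in Hs; simpl in Hs; unfold AbsRing_ball, abs, minus, plus, opp in Hs; simpl in Hs.
    apply is_derive_unique. apply Hder.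
    apply Rabs_def2 in Hs. lra. }
  assert (HDD : is_derive (Derive Rf) t (gamma * (delta * E t - gamma * I t))).
  { apply (is_derive_ext_loc (fun s => gamma * I s)).
    - apply (filter_imp (fun s => Derive Rf s = gamma * I s)); [|exact Hloc].
      intros s Hs; symmetry; exact Hs.
    - apply (is_derive_scal (fun s => I s)). apply Hder; exact Ht. }
  split; [eexists; exact HDD|].
  assert (HN : S t + E t + I t + Rf t = S0 + E0 + I0 + R0).
  { apply (const_pos (fun s => S s + E s + I s + Rf s)); [| |exact Ht].
    - intros s Hs. destruct (Hder s Hs) as [d1 [d2 [d3 d4]]].
      replace 0 with (- beta * S s * I s + (beta * S s * I s - delta * E s)
                      + (delta * E s - gamma * I s) + gamma * I s) by ring.
      apply @is_derive_plus; [apply @is_derive_plus; [apply @is_derive_plus|]|]; assumption.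
    - rewrite <- HS0, <- HE0, <- HI0, <- HR0.
      apply lim_plus; [apply lim_plus; [apply lim_plus|]|]; assumption. }
  assert (HSx : S t * exp ((beta/gamma) * Rf t) = S0 * exp ((beta / gamma) * R0)).
  { apply (const_pos (fun s => S s * exp ((beta/gamma) * Rf s))); [| |exact Ht].
    - intros s Hs. destruct (Hder s Hs) as [d1 [d2 [d3 d4]]].
      replace 0 with (- beta * S s * I s * exp ((beta/gamma) * Rf s)
                      + S s * ((beta/gamma) * (gamma * I s) * exp ((beta/gamma) * Rf s))) by (field; lra).
      apply (is_derive_mult S (fun s => exp ((beta/gamma) * Rf s))); [exact d1| |intros; apply Rmult_comm].
      apply (is_derive_comp exp (fun s => (beta/gamma) * Rf s)).
      + rewrite Rmult_comm. apply is_derive_exp.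
      + apply (is_derive_scal Rf). exact d4.
    - rewrite <- HS0, <- HR0.
      apply lim_mult; [assumption|]. apply lim_exp. assumption. }
  change (Derive (Derive Rf) t + (gamma + delta) * Derive Rf t = gamma * delta * (S0 + E0 + I0 + R0 - S0 * exp (beta / gamma * R0) * exp (- (beta / gamma) * Rf t) - Rf t)).
  rewrite (is_derive_unique _ _ _ HDD).
  rewrite (is_derive_unique _ _ _ (proj2 (proj2 (proj2 (Hder t Ht))))).
  rewrite <- HSx.
  replace (S t * exp (beta / gamma * Rf t) * exp (- (beta / gamma) * Rf t))
    with (S t * (exp (beta / gamma * Rf t) * exp (- (beta / gamma) * Rf t))) by ring.
  rewrite <- exp_plus.
  replace (beta / gamma * Rf t + - (beta / gamma) * Rf t) with 0 by ring.
  rewrite exp_0. rewrite <- HN. ring.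
Qed.
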